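(* Let $1\le p<\infty$, $N\ge2$, and let $T_1,\dots,T_N$ be unilateral pseudo-shifts $T_i=T_{f_i,\omega^{(i)}}$ on $\ell^p(\mathbb{N})$. Then $T_1,\dots,T_N$ are d-hypercyclic if and only if they possess a dense d-hypercyclic manifold.
   Context: $\{e_m\}$ is the canonical basis of $\ell^p(\mathbb{N})$ over $\mathbb{K}\in\{\mathbb{R},\mathbb{C}\}$. For a strictly increasing $f:\mathbb{N}\to\mathbb{N}$ with $f(1)>1$ and a bounded, nonzero sequence of scalars $\omega=(w_{f(m)})_{m\in\mathbb{N}}$, the unilateral pseudo-shift is $T_{f,\omega}(\sum_m\alpha_me_m)=\sum_mw_{f(m)}\alpha_{f(m)}e_m$. Operators $T_1,\dots,T_N$ on $X$ are d-hypercyclic if some $x$ (a d-hypercyclic vector) has $\{(T_1^nx,\dots,T_N^nx):n\ge0\}$ dense in $\oplus_{i=1}^NX$; a dense d-hypercyclic manifold is a dense linear subspace whose nonzero vectors are all d-hypercyclic vectors. *)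

(* Defs.v *)
From Stdlib Require Import Reals.
From Coquelicot Require Import Coquelicot.
Open Scope R_scope.

(* nonnegative real power a^p with the convention 0^p = 0 (p > 0) *)
Definition rpow (a p : R) : R := if Rle_dec a 0 then 0 else Rpower a p.

Section Lp.
Context {K : AbsRing}.

(* sequences indexed by nat = {0,1,2,...}; index m corresponds to the paper's m+1 *)
Definition in_lp (p : R) (x : nat -> K) : Prop :=
  ex_series (fun m => rpow (abs (x m)) p).

Definition lp_norm (p : R) (x : nat -> K) : R :=
  rpow (Series (fun m => rpow (abs (x m)) p)) (/ p).

Definition seq_sub (x y : nat -> K) : nat -> K := fun m => minus (x m) (y m).
Definition seq_add (x y : nat -> K) : nat -> K := fun m => plus (x m) (y m).
Definition seq_scal (a : K) (x : nat -> K) : nat -> K := fun m => mult a (x m).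
Definition seq_zero : nat -> K := fun _ => zero.

(* admissible data of a unilateral pseudo-shift (0-based indexing):
   f strictly increasing with f 0 > 0 (paper: f(1) > 1),
   weights w m (= paper's w_{f(m)}) bounded and nonzero *)
Definition pseudo_shift_data (f : nat -> nat) (w : nat -> K) : Prop :=
  (forall m n, (m < n)%nat -> (f m < f n)%nat) /\ (0 < f 0)%nat /\
  (exists B, forall m, abs (w m) <= B) /\ (forall m, w m <> zero).

Definition pseudo_shift (f : nat -> nat) (w : nat -> K) (x : nat -> K) : nat -> K :=
  fun m => mult (w m) (x (f m)).

Definition d_hypercyclic_vector (p : R) (N : nat)
    (T : nat -> (nat -> K) -> (nat -> K)) (x : nat -> K) : Prop :=
  in_lp p x /\
  forall ys : nat -> (nat -> K), (forall i, (i < N)%nat -> in_lp p (ys i)) ->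
  forall eps, 0 < eps ->
  exists n : nat, forall i, (i < N)%nat ->
    lp_norm p (seq_sub (Nat.iter n (T i) x) (ys i)) < eps.

Definition d_hypercyclic (p : R) (N : nat) (T : nat -> (nat -> K) -> (nat -> K)) : Prop :=
  exists x, d_hypercyclic_vector p N T x.

Definition has_dense_d_hypercyclic_manifold (p : R) (N : nat)
    (T : nat -> (nat -> K) -> (nat -> K)) : Prop :=
  exists M : (nat -> K) -> Prop,
    (forall x, M x -> in_lp p x) /\
    M seq_zero /\
    (forall x y, M x -> M y -> M (seq_add x y)) /\
    (forall a x, M x -> M (seq_scal a x)) /\
    (forall y, in_lp p y -> forall eps, 0 < eps ->
        exists x, M x /\ lp_norm p (seq_sub x y) < eps) /\
    (forall x, M x -> ~ (forall m, x m = zero) -> d_hypercyclic_vector p N T x).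

Definition corollary_statement : Prop :=
  forall (p : R) (N : nat) (fs : nat -> nat -> nat) (ws : nat -> nat -> K),
    1 <= p -> (2 <= N)%nat ->
    (forall i, (i < N)%nat -> pseudo_shift_data (fs i) (ws i)) ->
    (d_hypercyclic p N (fun i => pseudo_shift (fs i) (ws i)) <->
     has_dense_d_hypercyclic_manifold p N (fun i => pseudo_shift (fs i) (ws i))).

End Lp.

(* Main.v *)
Require Import Defs.
From Stdlib Require Import Reals Lra Lia Classical ClassicalEpsilon Cantor.
From Coquelicot Require Import Coquelicot.
Open Scope R_scope.

Lemma rpow_nonneg a p : 0 <= rpow a p.
Proof. unfold rpow; destruct (Rle_dec a 0). lra. unfold Rpower; left; apply exp_pos. Qed.

Lemma rpow_pos a p : 0 < a -> rpow a p = Rpower a p.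
Proof. intros H; unfold rpow; destruct (Rle_dec a 0); [lra|reflexivity]. Qed.

Lemma rpow_0 p : rpow 0 p = 0.
Proof. unfold rpow; destruct (Rle_dec 0 0); [reflexivity|lra]. Qed.

Lemma rpow_gt0 a p : 0 < a -> 0 < rpow a p.
Proof. intros H; rewrite rpow_pos by auto; unfold Rpower; apply exp_pos. Qed.

Lemma rpow_lt a b p : 0 < p -> 0 <= a < b -> rpow a p < rpow b p.
Proof.
  intros Hp [Ha Hab]. destruct Ha as [Ha|Ha].
  - rewrite !rpow_pos by lra. unfold Rpower. apply exp_increasing.
    apply Rmult_lt_compat_l; auto. apply ln_increasing; lra.
  - subst. rewrite rpow_0. apply rpow_gt0; lra.
Qed.

Lemma rpow_le a b p : 0 < p -> 0 <= a <= b -> rpow a p <= rpow b p.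
Proof.
  intros Hp [Ha Hab]. destruct Hab as [H|H]. left; apply rpow_lt; lra. subst; lra.
Qed.

Lemma rpow_mult a b p : 0 <= a -> 0 <= b -> rpow (a*b) p = rpow a p * rpow b p.
Proof.
  intros Ha Hb. destruct Ha as [Ha|Ha]; [|subst; rewrite Rmult_0_l, !rpow_0; ring].
  destruct Hb as [Hb|Hb]; [|subst; rewrite Rmult_0_r, !rpow_0; ring].
  rewrite !rpow_pos by (try apply Rmult_lt_0_compat; auto).
  symmetry; apply Rpower_mult_distr; auto.
Qed.

Lemma rpow_inv a p : 0 < p -> 0 <= a -> rpow (rpow a p) (/p) = a.
Proof.
  intros Hp Ha. destruct Ha as [Ha|Ha]; [|subst; rewrite !rpow_0; reflexivity].
  rewrite (rpow_pos a) by auto. rewrite rpow_pos by (unfold Rpower; apply exp_pos).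
  rewrite Rpower_mult. rewrite Rinv_r by lra. apply Rpower_1; auto.
Qed.

Lemma rpow_1 p : rpow 1 p = 1.
Proof. rewrite rpow_pos by lra. unfold Rpower. rewrite ln_1, Rmult_0_r. apply exp_0. Qed.

Lemma rpow_3sum s u v w p : 0 < p -> 0 <= s -> 0 <= u -> 0 <= v -> 0 <= w ->
  s <= u + v + w -> rpow s p <= rpow 3 p * (rpow u p + rpow v p + rpow w p).
Proof.
  intros Hp Hs Hu Hv Hw H.
  set (m := Rmax u (Rmax v w)).
  assert (Hm : s <= 3 * m).
  { unfold m. pose proof (Rmax_l u (Rmax v w)). pose proof (Rmax_r u (Rmax v w)).
    pose proof (Rmax_l v w). pose proof (Rmax_r v w). lra. }
  assert (Hm0 : 0 <= m) by (unfold m; pose proof (Rmax_l u (Rmax v w)); lra).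
  eapply Rle_trans. apply rpow_le with (b := 3*m); auto.
  rewrite rpow_mult by lra. apply Rmult_le_compat_l. apply rpow_nonneg.
  pose proof (rpow_nonneg u p). pose proof (rpow_nonneg v p). pose proof (rpow_nonneg w p).
  unfold m. unfold Rmax at 2. destruct (Rle_dec v w); unfold Rmax; destruct (Rle_dec u _); lra.
Qed.

Lemma sumn_S (a : nat -> R) n : sum_n a (S n) = sum_n a n + a (S n).
Proof. rewrite sum_Sn. reflexivity. Qed.

Lemma sumn_0 (a : nat -> R) : sum_n a 0 = a 0%nat.
Proof. rewrite sum_O. reflexivity. Qed.

Lemma sumn_nonneg a n : (forall m, 0 <= a m) -> 0 <= sum_n a n.
Proof. intros H; induction n. rewrite sumn_0; auto. rewrite sumn_S; specialize (H (S n)); lra. Qed.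

Lemma sumn_mono a n m : (forall m, 0 <= a m) -> (n <= m)%nat -> sum_n a n <= sum_n a m.
Proof.
  intros H Hnm; induction Hnm. lra. rewrite sumn_S; specialize (H (S m)); lra.
Qed.

Lemma sumn_term a k m : (forall m, 0 <= a m) -> (k <= m)%nat -> a k <= sum_n a m.
Proof.
  intros H Hk. apply Rle_trans with (sum_n a k); [|apply sumn_mono; auto].
  destruct k. rewrite sumn_0; lra. rewrite sumn_S. pose proof (sumn_nonneg a k H); lra.
Qed.

Lemma sumn_le a b n : (forall m, a m <= b m) -> sum_n a n <= sum_n b n.
Proof. intros H; induction n. rewrite !sumn_0; auto. rewrite !sumn_S; specialize (H (S n)); lra. Qed.

Lemma sumn_add_term a k m : (forall m, 0 <= a m) -> (k < m)%nat -> sum_n a k + a m <= sum_n a m.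
Proof.
  intros H Hk. destruct m. lia. rewrite sumn_S.
  pose proof (sumn_mono a k m H ltac:(lia)). lra.
Qed.

Lemma ser_lim a : ex_series a -> is_lim_seq (sum_n a) (Series a).
Proof. intros H. pose proof (Series_correct a H) as H0. exact H0. Qed.

Lemma ser_bounded a B : (forall n, 0 <= a n) -> (forall n, sum_n a n <= B) ->
  ex_series a /\ Series a <= B.
Proof.
  intros H HB.
  assert (Hm : forall n, sum_n a n <= sum_n a (S n)) by (intro n; rewrite sumn_S; specialize (H (S n)); lra).
  destruct (ex_finite_lim_seq_incr (sum_n a) B Hm HB) as [l Hl].
  assert (Hs : is_series a l) by exact Hl.
  split. exists l; auto.
  rewrite (is_series_unique a l Hs).
  pose proof (is_lim_seq_le (sum_n a) (fun _ => B) l B HB Hl (is_lim_seq_const B)) as Hle.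
  simpl in Hle. auto.
Qed.

Lemma ser_sumn_le a n : (forall m, 0 <= a m) -> ex_series a -> sum_n a n <= Series a.
Proof.
  intros H He. apply is_lim_seq_incr_compare. apply ser_lim; auto.
  intro k; rewrite sumn_S; specialize (H (S k)); lra.
Qed.

Lemma ser_term a k : (forall m, 0 <= a m) -> ex_series a -> a k <= Series a.
Proof.
  intros H He. apply Rle_trans with (sum_n a k). apply sumn_term; auto. apply ser_sumn_le; auto.
Qed.

Lemma ser_nonneg a : (forall m, 0 <= a m) -> ex_series a -> 0 <= Series a.
Proof. intros H He. apply Rle_trans with (a 0%nat); auto. apply ser_term; auto. Qed.

Lemma ser_cmp a b : (forall n, 0 <= a n <= b n) -> ex_series b -> ex_series a /\ Series a <= Series b.
Proof.
  intros H Hb. apply ser_bounded. intro n; apply H.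
  intro n. apply Rle_trans with (sum_n b n). apply sumn_le; intro; apply H.
  apply ser_sumn_le; auto. intro m; specialize (H m); lra.
Qed.

Lemma ser_finite a M : (forall m, 0 <= a m) -> (forall m, (M <= m)%nat -> a m = 0) -> ex_series a.
Proof.
  intros H HM. apply (ser_bounded a (sum_n a M) H). intro n.
  destruct (Nat.le_gt_cases n M). apply sumn_mono; auto.
  induction H0. rewrite sumn_S, HM by lia. lra. rewrite sumn_S, HM by lia. lra.
Qed.

Lemma ser_tail a d : (forall m, 0 <= a m) -> ex_series a -> 0 < d ->
  exists M, forall M' b, (M <= M')%nat -> (forall m, 0 <= b m <= if (M' <=? m)%nat then a m else 0) ->
  ex_series b /\ Series b <= d.
Proof.
  intros H He Hd.
  pose proof (ser_lim a He) as Hl. apply is_lim_seq_spec in Hl.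
  destruct (Hl (mkposreal d Hd)) as [K HK]. simpl in HK.
  exists (S K). intros M' b HM' Hb.
  set (ind := fun m => if (S K <=? m)%nat then a m else 0).
  assert (Heq : forall n, sum_n ind n + sum_n a K = sum_n a (Nat.max n K)).
  { induction n.
    - rewrite sumn_0. unfold ind. simpl. lra.
    - rewrite sumn_S. destruct (Nat.le_gt_cases (S n) K).
      + unfold ind at 2. destruct (S K <=? S n)%nat eqn:E. apply Nat.leb_le in E; lia.
        rewrite Nat.max_r by lia. rewrite Nat.max_r in IHn by lia. lra.
      + rewrite Nat.max_l by lia. rewrite Nat.max_l in IHn by lia. rewrite sumn_S.
        unfold ind at 2. destruct (S K <=? S n)%nat eqn:E. lra. apply Nat.leb_gt in E; lia.
    }
  apply ser_bounded. intro n; apply Hb. intro n.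
  apply Rle_trans with (sum_n ind n).
  { apply sumn_le. intro m. specialize (Hb m). specialize (H m). unfold ind.
    destruct (M' <=? m)%nat eqn:E1; destruct (S K <=? m)%nat eqn:E2; try lra.
    apply Nat.leb_le in E1; apply Nat.leb_gt in E2; lia. }
  specialize (Heq n). specialize (HK K (Nat.le_refl K)).
  pose proof (ser_sumn_le a (Nat.max n K) H He). apply Rabs_def2 in HK. destruct HK.
  change (@sum_n (NormedModule.AbelianMonoid R_AbsRing R_NormedModule) a K) with (@sum_n R_AbelianMonoid a K) in *. lra.
Qed.

Lemma ser_subseq a f : (forall m, 0 <= a m) -> ex_series a -> (forall n, (f n < f (S n))%nat) ->
  ex_series (fun n => a (f n)) /\ Series (fun n => a (f n)) <= Series a.
Proof.
  intros H He Hf. apply ser_bounded. intro; auto. intro n.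
  apply Rle_trans with (sum_n a (f n)); [|apply ser_sumn_le; auto].
  induction n. rewrite sumn_0. apply sumn_term; auto.
  rewrite sumn_S. pose proof (sumn_add_term a (f n) (f (S n)) H (Hf n)). lra.
Qed.

Definition ap {K : AbsRing} (p : R) (v : nat -> K) : nat -> R := fun m => rpow (abs (v m)) p.
Definition psum {K : AbsRing} (p : R) (v : nat -> K) : R := Series (ap p v).

Lemma ap_nonneg {K : AbsRing} p (v : nat -> K) m : 0 <= ap p v m.
Proof. apply rpow_nonneg. Qed.

Lemma psum_nonneg {K : AbsRing} p (v : nat -> K) : in_lp p v -> 0 <= psum p v.
Proof. intros H. apply ser_nonneg; auto. intro; apply ap_nonneg. Qed.

Lemma lp_lt {K : AbsRing} p (v : nat -> K) eps : 0 < p -> in_lp p v -> 0 < eps ->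
  (lp_norm p v < eps <-> psum p v < rpow eps p).
Proof.
  intros Hp Hv He. pose proof (psum_nonneg p v Hv) as H0.
  unfold lp_norm. fold (ap p v). fold (psum p v).
  assert (Hip : 0 < / p) by (apply Rinv_0_lt_compat; auto).
  split; intro H.
  - destruct (Rlt_or_le (psum p v) (rpow eps p)) as [|Hc]; auto.
    exfalso. assert (rpow (rpow eps p) (/p) <= rpow (psum p v) (/p)).
    { apply rpow_le; auto. split; auto. apply rpow_nonneg. }
    rewrite rpow_inv in H1 by lra. lra.
  - rewrite <- (rpow_inv eps p) by lra. apply rpow_lt; auto.
Qed.

Lemma ex_series_Rscal c (a : nat -> R) : ex_series a -> ex_series (fun n => c * a n).
Proof. intros H. apply (ex_series_scal_l c a H). Qed.

Lemma ex_series_Rplus (a b : nat -> R) : ex_series a -> ex_series b -> ex_series (fun n => a n + b n).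
Proof. intros H1 H2. apply (ex_series_plus a b H1 H2). Qed.

Lemma dom {K : AbsRing} p (u : nat -> K) (b : nat -> R) : (forall m, ap p u m <= b m) -> ex_series b ->
  in_lp p u /\ psum p u <= Series b.
Proof.
  intros H Hb. destruct (ser_cmp (ap p u) b) as [H1 H2]; auto.
  intro m; split; auto. apply ap_nonneg.
Qed.

Lemma lp3w {K : AbsRing} p (s u v w : nat -> K) A B C : 0 < p -> 0 <= A -> 0 <= B -> 0 <= C ->
  in_lp p u -> in_lp p v -> in_lp p w ->
  (forall m, abs (s m) <= A * abs (u m) + B * abs (v m) + C * abs (w m)) ->
  in_lp p s /\ psum p s <= rpow 3 p * (rpow A p * psum p u + rpow B p * psum p v + rpow C p * psum p w).
Proof.
  intros Hp HA HB HC Hu Hv Hw H.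
  set (b := fun m => rpow 3 p * (rpow A p * ap p u m + rpow B p * ap p v m + rpow C p * ap p w m)).
  assert (Hb : ex_series b).
  { unfold b. apply ex_series_Rscal. apply ex_series_Rplus. apply ex_series_Rplus.
    all: apply ex_series_Rscal; auto. }
  assert (Hsb : Series b = rpow 3 p * (rpow A p * psum p u + rpow B p * psum p v + rpow C p * psum p w)).
  { unfold b. rewrite Series_scal_l. f_equal. unfold psum.
    rewrite Series_plus. rewrite Series_plus. rewrite !Series_scal_l. reflexivity.
    all: try apply ex_series_Rplus; try apply ex_series_Rscal; auto. }
  rewrite <- Hsb. apply dom; auto. intro m. unfold b, ap.
  rewrite <- !rpow_mult by (auto; apply abs_ge_0).
  apply rpow_3sum; auto; try apply abs_ge_0; try (apply Rmult_le_pos; auto; apply abs_ge_0).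
Qed.

Lemma ap_zero {K : AbsRing} p m : ap p (@seq_zero K) m = 0.
Proof. unfold ap, seq_zero. rewrite abs_zero. apply rpow_0. Qed.

Lemma lp_zero {K : AbsRing} p : in_lp p (@seq_zero K) /\ psum p (@seq_zero K) = 0.
Proof.
  assert (H : in_lp p (@seq_zero K) /\ psum p (@seq_zero K) <= 0).
  { change (ex_series (ap p (@seq_zero K)) /\ Series (ap p (@seq_zero K)) <= 0).
    apply ser_bounded. intro; apply ap_nonneg. intro n.
    induction n. rewrite sumn_0, ap_zero; lra. rewrite sumn_S, ap_zero; lra. }
  destruct H as [H1 H2]. split; auto. pose proof (psum_nonneg p _ H1). lra.
Qed.

Lemma lp_finite {K : AbsRing} p (u : nat -> K) M : (forall m, (M <= m)%nat -> u m = zero) -> in_lp p u.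
Proof.
  intros H. apply (ser_finite _ M). intro; apply ap_nonneg.
  intros m Hm. unfold ap. rewrite H by auto. rewrite abs_zero. apply rpow_0.
Qed.

Lemma abs_minus_le {K : AbsRing} (a b : K) : abs (minus a b) <= abs a + abs b.
Proof. unfold minus. eapply Rle_trans. apply abs_triangle. rewrite abs_opp. lra. Qed.

Lemma lp_sub {K : AbsRing} p (u v : nat -> K) : 0 < p -> in_lp p u -> in_lp p v -> in_lp p (seq_sub u v).
Proof.
  intros Hp Hu Hv. destruct (lp_zero (K:=K) p) as [Hz _].
  apply (lp3w p _ u v seq_zero 1 1 1); auto; try lra.
  intro m. unfold seq_sub, seq_zero. rewrite abs_zero. pose proof (abs_minus_le (u m) (v m)). lra.
Qed.

Lemma mult_minus_l {K : Ring} (a x y : K) : mult a (minus x y) = minus (mult a x) (mult a y).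
Proof. unfold minus. rewrite opp_mult_r. apply mult_distr_l. Qed.

Lemma mult_minus_r {K : Ring} (a x y : K) : mult (minus x y) a = minus (mult x a) (mult y a).
Proof. unfold minus. rewrite opp_mult_l. apply mult_distr_r. Qed.

Lemma abs_minus3 {K : AbsRing} (a b c d : K) : abs (minus a d) <= abs (minus a b) + abs (minus b c) + abs (minus c d).
Proof.
  rewrite (minus_trans b a d). eapply Rle_trans. apply abs_triangle.
  rewrite Rplus_assoc. apply Rplus_le_compat_l.
  rewrite (minus_trans c b d). apply abs_triangle.
Qed.

Fixpoint Fit (f : nat -> nat) (n m : nat) : nat :=
  match n with 0 => m | S n' => Fit f n' (f m) end.

Definition It {K : AbsRing} (f : nat -> nat) (w : nat -> K) (n : nat) (v : nat -> K) : nat -> K :=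
  Nat.iter n (pseudo_shift f w) v.

Lemma f_gt (f : nat -> nat) : (forall m n, (m < n)%nat -> (f m < f n)%nat) -> (0 < f 0)%nat ->
  forall m, (m < f m)%nat.
Proof. intros Hf H0 m. induction m. auto. pose proof (Hf m (S m) ltac:(lia)). lia. Qed.

Lemma Fit_ge f : (forall m n, (m < n)%nat -> (f m < f n)%nat) -> (0 < f 0)%nat ->
  forall n m, (n + m <= Fit f n m)%nat.
Proof.
  intros Hf H0 n. induction n; intro m; simpl. lia.
  pose proof (IHn (f m)). pose proof (f_gt f Hf H0 m). lia.
Qed.

Lemma Fit_mono f : (forall m n, (m < n)%nat -> (f m < f n)%nat) ->
  forall n m m', (m < m')%nat -> (Fit f n m < Fit f n m')%nat.
Proof. intros Hf n. induction n; intros m m' H; simpl. auto. apply IHn. apply Hf; auto. Qed.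

Lemma It_Sr {K : AbsRing} f (w : nat -> K) n v : It f w (S n) v = It f w n (pseudo_shift f w v).
Proof. unfold It. apply Nat.iter_succ_r. Qed.

Lemma It_local {K : AbsRing} f (w : nat -> K) :
  (forall m n, (m < n)%nat -> (f m < f n)%nat) -> (0 < f 0)%nat ->
  forall n u v, (forall t, (n <= t)%nat -> u t = v t) -> forall m, It f w n u m = It f w n v m.
Proof.
  intros Hf H0 n. induction n; intros u v H m.
  - apply H; lia.
  - rewrite !It_Sr. apply IHn. intros t Ht. unfold pseudo_shift. rewrite H. reflexivity.
    pose proof (f_gt f Hf H0 t). lia.
Qed.

Lemma It_zero {K : AbsRing} f (w : nat -> K) n m : It f w n seq_zero m = zero.
Proof.
  revert m; induction n; intro m. reflexivity.
  change (mult (w m) (It f w n seq_zero (f m)) = zero). rewrite IHn. exact (@mult_zero_r (AbsRing.Ring K) (w m)).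
Qed.

Lemma It_plus {K : AbsRing} f (w : nat -> K) n u v m :
  It f w n (fun t => plus (u t) (v t)) m = plus (It f w n u m) (It f w n v m).
Proof.
  revert m; induction n; intro m. reflexivity.
  change (mult (w m) (It f w n (fun t => plus (u t) (v t)) (f m)) =
          plus (mult (w m) (It f w n u (f m))) (mult (w m) (It f w n v (f m)))).
  rewrite IHn. exact (@mult_distr_l (AbsRing.Ring K) _ _ _).
Qed.

Lemma It_pm {K : AbsRing} f (w : nat -> K) (Hc : forall a b : K, mult a b = mult b a) n g v m :
  It f w n (fun t => mult (g t) (v t)) m = mult (g (Fit f n m)) (It f w n v m).
Proof.
  revert m; induction n; intro m. reflexivity.
  change (mult (w m) (It f w n (fun t => mult (g t) (v t)) (f m)) =
          mult (g (Fit f n (f m))) (mult (w m) (It f w n v (f m)))).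
  rewrite IHn. rewrite !mult_assoc. f_equal. apply Hc.
Qed.

Lemma lp_shift {K : AbsRing} p f (w : nat -> K) v : 0 < p -> pseudo_shift_data f w -> in_lp p v ->
  in_lp p (pseudo_shift f w v).
Proof.
  intros Hp [Hf [H0 [[B HB] Hw]]] Hv.
  assert (HB0 : 0 <= B) by (pose proof (HB 0%nat); pose proof (abs_ge_0 (w 0%nat)); lra).
  assert (Hs : ex_series (fun n => ap p v (f n))).
  { apply ser_subseq; [intro; apply ap_nonneg | auto | intro n; apply Hf; lia]. }
  apply (dom p _ (fun m => rpow B p * ap p v (f m))).
  - intro m. unfold ap, pseudo_shift. rewrite <- rpow_mult by (auto; apply abs_ge_0).
    apply rpow_le; auto. split. apply abs_ge_0. eapply Rle_trans. apply abs_mult.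
    apply Rmult_le_compat_r. apply abs_ge_0. auto.
  - apply ex_series_Rscal; auto.
Qed.

Lemma lp_It {K : AbsRing} p f (w : nat -> K) n v : 0 < p -> pseudo_shift_data f w -> in_lp p v ->
  in_lp p (It f w n v).
Proof.
  intros Hp Hd Hv. induction n. auto.
  change (in_lp p (pseudo_shift f w (It f w n v))). apply lp_shift; auto.
Qed.

Record goodK (K : AbsRing) : Prop := mkGood {
  gk_comm : forall a b : K, mult a b = mult b a;
  gk_abs : forall a b : K, abs (mult a b) = abs a * abs b;
  gk_inv : forall a : K, a <> zero -> exists b : K, mult b a = one;
  gk_val : forall r, 0 < r -> exists a : K, abs a = r }.

Lemma rpow_inv' a p : 0 < p -> 0 <= a -> rpow (rpow a (/p)) p = a.
Proof.
  intros Hp Ha. pose proof (rpow_inv a (/p) ltac:(apply Rinv_0_lt_compat; auto) Ha) as H.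
  rewrite Rinv_inv in H. auto.
Qed.

Lemma hc_psum {K : AbsRing} p N (T : nat -> (nat -> K) -> (nat -> K)) x :
  0 < p -> (forall i n, (i < N)%nat -> in_lp p (Nat.iter n (T i) x)) ->
  d_hypercyclic_vector p N T x ->
  forall ys, (forall i, (i < N)%nat -> in_lp p (ys i)) -> forall r, 0 < r ->
  exists n, forall i, (i < N)%nat -> psum p (seq_sub (Nat.iter n (T i) x) (ys i)) < r.
Proof.
  intros Hp HT [Hx Hd] ys Hys r Hr.
  assert (He : 0 < rpow r (/p)) by (apply rpow_gt0; auto).
  destruct (Hd ys Hys _ He) as [n Hn]. exists n. intros i Hi.
  specialize (Hn i Hi). apply lp_lt in Hn; auto.
  rewrite rpow_inv' in Hn; auto; lra. apply lp_sub; auto.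
Qed.

Lemma ev_small {K : AbsRing} p (v : nat -> K) al : 0 < p -> in_lp p v -> 0 < al ->
  exists M, forall m, (M <= m)%nat -> abs (v m) < al.
Proof.
  intros Hp Hv Ha. pose proof (ex_series_lim_0 _ Hv) as H. apply is_lim_seq_spec in H.
  destruct (H (mkposreal _ (rpow_gt0 al p Ha))) as [M HM]. exists M. intros m Hm.
  specialize (HM m Hm). simpl in HM. rewrite Rminus_0_r in HM.
  destruct (Rlt_or_le (abs (v m)) al) as [|Hc]; auto. exfalso.
  assert (rpow al p <= rpow (abs (v m)) p) by (apply rpow_le; lra).
  pose proof (rpow_nonneg (abs (v m)) p). rewrite Rabs_right in HM by lra. lra.
Qed.

Lemma fin_ev (P : nat -> nat -> Prop) n0 :
  (forall n, (n < n0)%nat -> exists M, forall m, (M <= m)%nat -> P n m) ->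
  exists M, forall m, (M <= m)%nat -> forall n, (n < n0)%nat -> P n m.
Proof.
  induction n0; intro H. exists 0%nat; intros; lia.
  destruct IHn0 as [M1 H1]. intros n Hn; apply H; lia.
  destruct (H n0 ltac:(lia)) as [M2 H2]. exists (Nat.max M1 M2). intros m Hm n Hn.
  destruct (Nat.eq_dec n n0). subst. apply H2; lia. apply H1; lia.
Qed.

Lemma single_ser c K0 : 0 <= c -> ex_series (fun m => if (m =? K0)%nat then c else 0) /\
  Series (fun m => if (m =? K0)%nat then c else 0) <= c.
Proof.
  intros Hc. apply ser_bounded. intro m; destruct (m =? K0)%nat; lra.
  assert (H : forall n, sum_n (fun m => if (m =? K0)%nat then c else 0) n = if (K0 <=? n)%nat then c else 0).
  { induction n. rewrite sumn_0. destruct K0; simpl; reflexivity.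
    rewrite sumn_S, IHn. cbv beta. destruct (Nat.eqb_spec (S n) K0); destruct (Nat.leb_spec K0 n);
    destruct (Nat.leb_spec K0 (S n)); try lia; lra. }
  intro n. rewrite H. destruct (K0 <=? n)%nat; lra.
Qed.

Lemma plus_minus_l {G : AbelianGroup} (y a : G) : minus (plus y a) y = a.
Proof.
  unfold minus. rewrite (plus_comm y a), <- plus_assoc. transitivity (plus a zero).
  f_equal. apply plus_opp_r. apply plus_zero_r.
Qed.

Lemma late {K : AbsRing} (HK : goodK K) p N fs (ws : nat -> nat -> K) x :
  0 < p -> (1 <= N)%nat -> (forall i, (i < N)%nat -> pseudo_shift_data (fs i) (ws i)) ->
  d_hypercyclic_vector p N (fun i => pseudo_shift (fs i) (ws i)) x ->
  forall ys, (forall i, (i < N)%nat -> in_lp p (ys i)) -> forall r, 0 < r -> forall n0,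
  exists n, (n0 <= n)%nat /\ forall i, (i < N)%nat -> psum p (seq_sub (It (fs i) (ws i) n x) (ys i)) < r.
Proof.
  intros Hp HN Hd Hx ys Hys r Hr n0.
  assert (Hx0 : in_lp p x) by apply Hx.
  assert (HIt : forall i n, (i < N)%nat -> in_lp p (It (fs i) (ws i) n x)).
  { intros i n Hi. apply lp_It; auto. }
  set (r3 := rpow 3 p). assert (Hr3 : 0 < r3) by (apply rpow_gt0; lra).
  set (q := r / (2 * r3)). assert (Hq : 0 < q) by (unfold q; apply Rdiv_lt_0_compat; lra).
  set (eta := rpow q (/p)). assert (Heta : 0 < eta) by (apply rpow_gt0; auto).
  assert (Heta' : rpow eta p = q) by (apply rpow_inv'; lra).
  set (al := eta / 3). assert (Hal : 0 < al) by (unfold al; lra).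
  set (r' := Rmin q (rpow al p)).
  assert (Hr' : 0 < r') by (unfold r'; apply Rmin_pos; auto; apply rpow_gt0; auto).
  destruct (fin_ev (fun n m => abs (It (fs 0%nat) (ws 0%nat) n x m) < al /\ abs (ys 0%nat m) < al) n0)
    as [K0 HK0].
  { intros n Hn. destruct (ev_small p _ al Hp (HIt 0%nat n ltac:(lia)) Hal) as [M1 H1].
    destruct (ev_small p _ al Hp (Hys 0%nat ltac:(lia)) Hal) as [M2 H2].
    exists (Nat.max M1 M2). intros m Hm. split; [apply H1|apply H2]; lia. }
  specialize (HK0 K0 (Nat.le_refl _)).
  destruct (gk_val K HK eta Heta) as [a Ha].
  set (e := fun m => if (m =? K0)%nat then a else zero).
  assert (He : in_lp p e).
  { apply (lp_finite p e (S K0)). intros m Hm. unfold e. destruct (m =? K0)%nat eqn:E; auto.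
    apply Nat.eqb_eq in E; lia. }
  assert (Hepsum : psum p e <= q).
  { rewrite <- Heta'. destruct (single_ser (rpow eta p) K0) as [H1 H2]. apply rpow_nonneg.
    assert (Hdom : forall m, ap p e m <= (if (m =? K0)%nat then rpow eta p else 0)).
    { intro m. unfold ap, e. destruct (m =? K0)%nat. rewrite Ha; lra. rewrite abs_zero, rpow_0; lra. }
    destruct (dom p e _ Hdom H1) as [_ H3]. lra. }
  set (y' := fun m => if (m =? K0)%nat then plus (ys 0%nat m) a else ys 0%nat m).
  assert (Hy'e : forall m, minus (y' m) (ys 0%nat m) = e m).
  { intro m. unfold y', e. destruct (m =? K0)%nat. exact (@plus_minus_l (AbsRing.AbelianGroup K) _ _). exact (@minus_eq_zero (AbsRing.AbelianGroup K) _). }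
  destruct (lp_zero (K:=K) p) as [Hz Hz'].
  assert (Hy' : in_lp p y').
  { assert (Hb : forall m, abs (y' m) <= 1 * abs (ys 0%nat m) + 1 * abs (e m) + 1 * abs (@seq_zero K m)).
    { intro m. unfold y', e, seq_zero. rewrite abs_zero. destruct (m =? K0)%nat.
      pose proof (abs_triangle (ys 0%nat m) a). lra. rewrite abs_zero. lra. }
    destruct (lp3w p y' (ys 0%nat) e seq_zero 1 1 1 Hp ltac:(lra) ltac:(lra) ltac:(lra)
      (Hys 0%nat ltac:(lia)) He Hz Hb) as [H _]. exact H. }
  set (ys' := fun i => if (i =? 0)%nat then y' else ys i).
  assert (Hys' : forall i, (i < N)%nat -> in_lp p (ys' i)).
  { intros i Hi. unfold ys'. destruct (i =? 0)%nat; auto. }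
  destruct (hc_psum p N _ x Hp (fun i n Hi => HIt i n Hi) Hx ys' Hys' r' Hr') as [n Hn].
  exists n. split.
  - destruct (Nat.le_gt_cases n0 n) as [|Hc]; auto. exfalso.
    specialize (Hn 0%nat ltac:(lia)). simpl in Hn.
    destruct (HK0 n Hc) as [Hxa Hya].
    set (v := seq_sub (It (fs 0%nat) (ws 0%nat) n x) y').
    assert (Hv : in_lp p v) by (apply lp_sub; auto).
    pose proof (ser_term (ap p v) K0 (ap_nonneg p v) Hv) as Ht.
    change (Series (ap p v)) with (psum p v) in Ht.
    assert (Hlow : al <= abs (v K0)).
    { unfold v, seq_sub, y'. rewrite Nat.eqb_refl.
      set (xx := It (fs 0%nat) (ws 0%nat) n x K0) in *. set (yy := ys 0%nat K0) in *.
      assert (E1 : minus (plus yy a) yy = a) by exact (@plus_minus_l (AbsRing.AbelianGroup K) _ _).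
      assert (E4 : plus (minus (plus yy a) xx) (minus xx yy) = a).
      { transitivity (minus (plus yy a) yy).
        exact (eq_sym (@minus_trans (AbsRing.AbelianGroup K) xx (plus yy a) yy)). exact E1. }
      assert (T1 : abs a <= abs (minus (plus yy a) xx) + abs (minus xx yy)).
      { rewrite <- E4 at 1. exact (abs_triangle _ _). }
      assert (T2 : abs (minus (plus yy a) xx) = abs (minus xx (plus yy a))) by exact (abs_minus _ _). pose proof (abs_minus_le xx yy).
      rewrite Ha in T1. unfold al in *.
      clearbody xx yy. lra. }
    assert (rpow al p <= ap p v K0). unfold ap. apply rpow_le. exact Hp. split. left; exact Hal. exact Hlow.
    assert (r' <= rpow al p) by apply Rmin_r. change (psum p v < r') in Hn. lra.
  - intros i Hi. specialize (Hn i Hi). unfold ys' in Hn.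
    destruct (i =? 0)%nat eqn:Ei.
    + apply Nat.eqb_eq in Ei. subst i.
      destruct (lp3w p (seq_sub (It (fs 0%nat) (ws 0%nat) n x) (ys 0%nat))
                  (seq_sub (It (fs 0%nat) (ws 0%nat) n x) y') e seq_zero 1 1 1) as [_ Hb];
        auto; try lra. apply lp_sub; auto.
      { intro m. unfold seq_sub. set (X := It (fs 0%nat) (ws 0%nat) n x).
        assert (E : minus (X m) (ys 0%nat m) = plus (minus (X m) (y' m)) (minus (y' m) (ys 0%nat m)))
          by exact (minus_trans _ _ _).
        assert (T : abs (plus (minus (X m) (y' m)) (minus (y' m) (ys 0%nat m))) <=
                    abs (minus (X m) (y' m)) + abs (minus (y' m) (ys 0%nat m))) by exact (abs_triangle _ _).
        rewrite <- E in T. rewrite Hy'e in T. pose proof (abs_ge_0 (@seq_zero K m)). lra. }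
      rewrite rpow_1, Hz' in Hb. fold r3 in Hb.
      assert (r' <= q) by apply Rmin_l.
      assert (r3 * q = r / 2) by (unfold q; field; lra).
      change (psum p (seq_sub (It (fs 0%nat) (ws 0%nat) n x) y') < r') in Hn.
      set (A := psum p (seq_sub (It (fs 0%nat) (ws 0%nat) n x) y')) in *.
      assert (r3 * A < r3 * q) by (apply Rmult_lt_compat_l; lra).
      assert (r3 * psum p e <= r3 * q) by (apply Rmult_le_compat_l; lra).
      rewrite !Rmult_1_l, Rplus_0_r, Rmult_plus_distr_l in Hb. lra.
    + assert (r' <= q) by apply Rmin_l.
      assert (q < r) by (unfold q; apply Rmult_lt_reg_r with (2 * r3); [lra|]; unfold Rdiv;
        rewrite Rmult_assoc, Rinv_l by lra; assert (1 <= r3) by (unfold r3; rewrite <- (rpow_1 p); apply rpow_le; lra); nra).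
      change (psum p (seq_sub (It (fs i) (ws i) n x) (ys i)) < r') in Hn. lra.
Qed.

Lemma Kpa {K : AbsRing} (a b c : K) : plus a (plus b c) = plus (plus a b) c.
Proof. exact (@plus_assoc (AbsRing.AbelianMonoid K) a b c). Qed.
Lemma Kpc {K : AbsRing} (a b : K) : plus a b = plus b a.
Proof. exact (@plus_comm (AbsRing.AbelianMonoid K) a b). Qed.
Lemma Kp0r {K : AbsRing} (a : K) : plus a zero = a.
Proof. exact (@plus_zero_r (AbsRing.AbelianMonoid K) a). Qed.
Lemma Kp0l {K : AbsRing} (a : K) : plus zero a = a.
Proof. exact (@plus_zero_l (AbsRing.AbelianMonoid K) a). Qed.
Lemma Km0r {K : AbsRing} (a : K) : mult a (@zero K) = @zero K.
Proof. exact (@mult_zero_r (AbsRing.Ring K) a). Qed.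
Lemma Km0l {K : AbsRing} (a : K) : mult (@zero K) a = @zero K.
Proof. exact (@mult_zero_l (AbsRing.Ring K) a). Qed.
Lemma Kmdl {K : AbsRing} (a b c : K) : mult a (plus b c) = plus (mult a b) (mult a c).
Proof. exact (@mult_distr_l (AbsRing.Ring K) a b c). Qed.
Lemma Kmdr {K : AbsRing} (a b c : K) : mult (plus a b) c = plus (mult a c) (mult b c).
Proof. exact (@mult_distr_r (AbsRing.Ring K) a b c). Qed.
Lemma Kma {K : AbsRing} (a b c : K) : mult a (mult b c) = mult (mult a b) c.
Proof. exact (@mult_assoc (AbsRing.Ring K) a b c). Qed.
Lemma Kp4 {K : AbsRing} (a b c d : K) : plus (plus a b) (plus c d) = plus (plus a c) (plus b d).
Proof.
  rewrite <- !Kpa. f_equal. rewrite !Kpa. f_equal. apply Kpc.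
Qed.

Fixpoint ksum {K : AbsRing} (L : nat) (h : nat -> K) : K :=
  match L with 0 => zero | S L' => plus (ksum L' h) (h L') end.

Lemma ksum_zero_lt {K : AbsRing} L (h : nat -> K) : (forall l, (l < L)%nat -> h l = zero) -> ksum L h = zero.
Proof. induction L; intro H; simpl. auto. rewrite IHL. rewrite H by lia. apply Kp0r. intros; apply H; lia. Qed.

Lemma ksum_ext_zero {K : AbsRing} L1 L (h : nat -> K) : (forall l, (L1 <= l)%nat -> h l = zero) -> (L1 <= L)%nat ->
  ksum L h = ksum L1 h.
Proof. intros H HL. induction HL. auto. simpl. rewrite IHHL, H by lia. apply Kp0r. Qed.

Lemma ksum_plus {K : AbsRing} L (h1 h2 : nat -> K) :
  ksum L (fun l => plus (h1 l) (h2 l)) = plus (ksum L h1) (ksum L h2).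
Proof. induction L; simpl. rewrite Kp0r; auto. rewrite IHL. apply Kp4. Qed.

Lemma ksum_scal {K : AbsRing} L a (h : nat -> K) : ksum L (fun l => mult a (h l)) = mult a (ksum L h).
Proof. induction L; simpl. symmetry; exact (Km0r a). rewrite IHL. symmetry; exact (Kmdl _ _ _). Qed.

Lemma ksum_ext {K : AbsRing} L (h1 h2 : nat -> K) : (forall l, h1 l = h2 l) -> ksum L h1 = ksum L h2.
Proof. intro H; induction L; simpl; auto. rewrite IHL, H; auto. Qed.

Lemma ksum_delta {K : AbsRing} L l0 (v : K) :
  ksum L (fun l => if (l =? l0)%nat then v else zero) = if (l0 <? L)%nat then v else zero.
Proof.
  induction L; simpl. destruct l0; auto. rewrite IHL.
  destruct (Nat.eqb_spec L l0); destruct (Nat.ltb_spec l0 L); destruct (Nat.ltb_spec l0 (S L));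
    try lia; try apply Kp0r. subst. apply Kp0l.
Qed.

Fixpoint rsumR (L : nat) (h : nat -> R) : R :=
  match L with 0 => 0 | S L' => rsumR L' h + h L' end.

Lemma rsumR_nonneg L h : (forall l, 0 <= h l) -> 0 <= rsumR L h.
Proof. intro H; induction L; simpl. lra. specialize (H L); lra. Qed.

Lemma rsumR_term L h l : (forall l, 0 <= h l) -> (l < L)%nat -> h l <= rsumR L h.
Proof.
  intros H Hl. induction L. lia. simpl. destruct (Nat.eq_dec l L). subst.
  pose proof (rsumR_nonneg L h H); lra. pose proof (H L). assert (h l <= rsumR L h) by (apply IHL; lia). lra.
Qed.

Fixpoint ends (st : nat -> nat -> nat * nat) (k : nat) : nat :=
  match k with 0 => snd (st 0%nat 0%nat) | S k' => snd (st (S k') (ends st k')) end.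
Definition prevend st k := match k with 0 => 0%nat | S k' => ends st k' end.
Definition start st k := fst (st k (prevend st k)).

Lemma ends_eq st k : ends st k = snd (st k (prevend st k)).
Proof. destruct k; reflexivity. Qed.

Definition inwb st k t := andb (start st k <=? t)%nat (t <? ends st k)%nat.

Fixpoint srch st (k t : nat) : option nat :=
  match k with
  | 0 => if inwb st 0 t then Some 0%nat else None
  | S k' => if inwb st (S k') t then Some (S k') else srch st k' t
  end.
Definition widx st t := srch st t t.

Lemma win_facts st : (forall k prev, (prev < fst (st k prev) <= snd (st k prev))%nat) ->
  (forall k, (start st k <= ends st k)%nat) /\ (forall k, (ends st k < start st (S k))%nat) /\
  (forall k k', (k < k')%nat -> (ends st k < start st k')%nat) /\ (forall k, (k <= start st k)%nat).
Proof.
  intros H.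
  assert (H1 : forall k, (start st k <= ends st k)%nat).
  { intro k. rewrite ends_eq. unfold start. apply H. }
  assert (H2 : forall k, (ends st k < start st (S k))%nat).
  { intro k. unfold start. simpl. apply H. }
  assert (H3 : forall k k', (k < k')%nat -> (ends st k < start st k')%nat).
  { intros k k' Hk. induction Hk. apply H2. pose proof (H1 m). pose proof (H2 m). lia. }
  split; auto. split; auto. split; auto.
  intro k. induction k. lia. pose proof (H1 k). pose proof (H2 k). lia.
Qed.

Lemma inwb_spec st k t : inwb st k t = true <-> (start st k <= t < ends st k)%nat.
Proof. unfold inwb. rewrite Bool.andb_true_iff, Nat.leb_le, Nat.ltb_lt. tauto. Qed.

Lemma win_unique st : (forall k prev, (prev < fst (st k prev) <= snd (st k prev))%nat) ->
  forall k k' t, (start st k <= t < ends st k)%nat -> (start st k' <= t < ends st k')%nat -> k = k'.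
Proof.
  intros H k k' t Hk Hk'. destruct (win_facts st H) as [_ [_ [H3 _]]].
  destruct (Nat.lt_total k k') as [Hl|[|Hl]]; auto.
  pose proof (H3 _ _ Hl); lia. pose proof (H3 _ _ Hl); lia.
Qed.

Lemma srch_some st k t j : srch st k t = Some j -> (start st j <= t < ends st j)%nat.
Proof.
  induction k; simpl.
  - destruct (inwb st 0 t) eqn:E; intro Hs; inversion Hs; subst. apply inwb_spec; auto.
  - destruct (inwb st (S k) t) eqn:E; intro Hs. inversion Hs; subst. apply inwb_spec; auto. auto.
Qed.

Lemma srch_in st : (forall k prev, (prev < fst (st k prev) <= snd (st k prev))%nat) ->
  forall k t j, (j <= k)%nat -> (start st j <= t < ends st j)%nat -> srch st k t = Some j.
Proof.
  intros H k. induction k; intros t j Hj Ht; simpl.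
  - assert (j = 0%nat) by lia. subst. apply inwb_spec in Ht. rewrite Ht. auto.
  - destruct (inwb st (S k) t) eqn:E.
    + apply inwb_spec in E. f_equal. apply (win_unique st H _ _ t E Ht).
    + destruct (Nat.eq_dec j (S k)). subst. apply inwb_spec in Ht. congruence.
      apply IHk; auto. lia.
Qed.

Lemma widx_in st : (forall k prev, (prev < fst (st k prev) <= snd (st k prev))%nat) ->
  forall t j, (start st j <= t < ends st j)%nat -> widx st t = Some j.
Proof.
  intros H t j Ht. apply srch_in; auto. destruct (win_facts st H) as [_ [_ [_ H4]]].
  pose proof (H4 j). lia.
Qed.

Lemma widx_some st t j : widx st t = Some j -> (start st j <= t < ends st j)%nat.
Proof. apply srch_some. Qed.

Lemma my_choice {A B : Type} (P : A -> B -> Prop) : (forall a, exists b, P a b) -> exists f, forall a, P a (f a).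
Proof.
  intros H. exists (fun a => proj1_sig (constructive_indefinite_description _ (H a))).
  intro a. apply (proj2_sig (constructive_indefinite_description _ (H a))).
Qed.

Lemma fst_of_nat_le l : (fst (Cantor.of_nat l) <= l)%nat.
Proof.
  pose proof (Cantor.to_nat_non_decreasing (fst (Cantor.of_nat l)) (snd (Cantor.of_nat l))) as H.
  rewrite <- surjective_pairing, Cantor.cancel_to_of in H. lia.
Qed.

Lemma to_nat_ge_snd a b : (b <= Cantor.to_nat (a, b))%nat.
Proof. pose proof (Cantor.to_nat_non_decreasing a b). lia. Qed.

Definition lbl k := fst (Cantor.of_nat (fst (Cantor.of_nat k))).
Definition tgt k := snd (Cantor.of_nat (fst (Cantor.of_nat k))).
Definition gco {K : AbsRing} st (c : nat -> K) t : K :=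
  match widx st t with Some k => c (lbl k) | None => zero end.
Definition zco {K : AbsRing} (c : nat -> K) L t : K :=
  ksum L (fun l => if (fst (Cantor.of_nat l) =? t)%nat then c l else zero).
Definition Xv {K : AbsRing} st (x : nat -> K) c L t : K := plus (zco c L t) (mult (gco st c t) (x t)).
Definition Mset {K : AbsRing} st (x : nat -> K) (y : nat -> K) : Prop :=
  exists c L, (forall l, (L <= l)%nat -> c l = zero) /\ forall t, y t = Xv st x c L t.

Lemma zco_ext {K : AbsRing} (c : nat -> K) L1 L : (forall l, (L1 <= l)%nat -> c l = zero) -> (L1 <= L)%nat ->
  forall t, zco c L t = zco c L1 t.
Proof.
  intros H HL t. unfold zco. apply ksum_ext_zero; auto. intros l Hl. rewrite H by auto.
  destruct (fst (Cantor.of_nat l) =? t)%nat; auto.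
Qed.

Lemma M_zero {K : AbsRing} st (x : nat -> K) : Mset st x seq_zero.
Proof.
  exists (fun _ => zero), 0%nat. split. auto. intro t. unfold Xv, zco, gco, seq_zero. simpl.
  rewrite Kp0l. destruct (widx st t); symmetry; exact (Km0l _).
Qed.

Lemma M_add {K : AbsRing} st (x : nat -> K) y1 y2 : Mset st x y1 -> Mset st x y2 -> Mset st x (seq_add y1 y2).
Proof.
  intros [c1 [L1 [H1 E1]]] [c2 [L2 [H2 E2]]].
  exists (fun l => plus (c1 l) (c2 l)), (Nat.max L1 L2). split.
  { intros l Hl. rewrite H1, H2 by lia. apply Kp0r. }
  intro t. unfold seq_add. rewrite E1, E2. unfold Xv.
  assert (Hz : zco (fun l => plus (c1 l) (c2 l)) (Nat.max L1 L2) t = plus (zco c1 L1 t) (zco c2 L2 t)).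
  { rewrite <- (zco_ext c1 L1 (Nat.max L1 L2)), <- (zco_ext c2 L2 (Nat.max L1 L2)) by (auto; lia).
    unfold zco. rewrite <- ksum_plus. apply ksum_ext. intro l.
    destruct (fst (Cantor.of_nat l) =? t)%nat; auto. symmetry; apply Kp0r. }
  assert (Hg : gco st (fun l => plus (c1 l) (c2 l)) t = plus (gco st c1 t) (gco st c2 t)).
  { unfold gco. destruct (widx st t); auto. symmetry; apply Kp0r. }
  rewrite Hz, Hg, Kmdr. symmetry. apply Kp4.
Qed.

Lemma M_scal {K : AbsRing} st (x : nat -> K) a y : Mset st x y -> Mset st x (seq_scal a y).
Proof.
  intros [c [L [H E]]].
  exists (fun l => mult a (c l)), L. split.
  { intros l Hl. rewrite H by lia. exact (Km0r a). }
  intro t. unfold seq_scal. rewrite E. unfold Xv.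
  assert (Hz : zco (fun l => mult a (c l)) L t = mult a (zco c L t)).
  { unfold zco. rewrite <- ksum_scal. apply ksum_ext. intro l.
    destruct (fst (Cantor.of_nat l) =? t)%nat; auto. symmetry; exact (Km0r a). }
  assert (Hg : gco st (fun l => mult a (c l)) t = mult a (gco st c t)).
  { unfold gco. destruct (widx st t); auto. symmetry; exact (Km0r a). }
  rewrite Hz, Hg, Kmdl, Kma. reflexivity.
Qed.

Lemma gco_bound {K : AbsRing} st (c : nat -> K) L : (forall l, (L <= l)%nat -> c l = zero) ->
  forall t, abs (gco st c t) <= rsumR L (fun l => abs (c l)).
Proof.
  intros H t. assert (H0 : forall l, abs (c l) <= rsumR L (fun l => abs (c l))).
  { intro l. destruct (Nat.lt_ge_cases l L). apply (rsumR_term L (fun l => abs (c l))); auto.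
    intro; apply abs_ge_0. rewrite H by auto. rewrite abs_zero. apply rsumR_nonneg. intro; apply abs_ge_0. }
  unfold gco. destruct (widx st t); auto. rewrite abs_zero. apply rsumR_nonneg. intro; apply abs_ge_0.
Qed.

Lemma zco_supp {K : AbsRing} (c : nat -> K) L t : (L <= t)%nat -> zco c L t = zero.
Proof.
  intros Ht. unfold zco. apply ksum_zero_lt. intros l Hl.
  destruct (Nat.eqb_spec (fst (Cantor.of_nat l)) t); auto. pose proof (fst_of_nat_le l). lia.
Qed.

Lemma M_lp {K : AbsRing} p st (x : nat -> K) y : 0 < p -> in_lp p x -> Mset st x y -> in_lp p y.
Proof.
  intros Hp Hx [c [L [H E]]].
  set (C := rsumR L (fun l => abs (c l))).
  assert (HC : 0 <= C) by (apply rsumR_nonneg; intro; apply abs_ge_0).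
  assert (Hz : in_lp p (zco c L)) by (apply (lp_finite p _ L); intros; apply zco_supp; auto).
  destruct (lp_zero (K:=K) p) as [H0 _].
  assert (Hb : forall m, abs (y m) <= 1 * abs (zco c L m) + C * abs (x m) + 1 * abs (@seq_zero K m)).
  { intro m. rewrite E. unfold Xv. pose proof (abs_ge_0 (@seq_zero K m)).
    eapply Rle_trans. apply abs_triangle.
    assert (abs (mult (gco st c m) (x m)) <= C * abs (x m)).
    { eapply Rle_trans. apply abs_mult. apply Rmult_le_compat_r. apply abs_ge_0. apply gco_bound; auto. }
    lra. }
  destruct (lp3w p y _ x seq_zero 1 C 1 Hp ltac:(lra) HC ltac:(lra) Hz Hx H0 Hb) as [Hy _]. exact Hy.
Qed.

Lemma M_nonzero {K : AbsRing} st (x : nat -> K) c L : ~ (forall m, Xv st x c L m = zero) -> exists l, c l <> zero.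
Proof.
  intros H. apply Classical_Pred_Type.not_all_ex_not. intro Hc. apply H. intro m.
  unfold Xv, zco, gco. rewrite ksum_zero_lt. destruct (widx st m). rewrite Hc.
  rewrite Kp0l. exact (Km0l _). rewrite Kp0l. exact (Km0l _).
  intros l _. destruct (fst (Cantor.of_nat l) =? m)%nat; auto.
Qed.

Lemma nat_unbounded D : exists n : nat, D < INR n.
Proof.
  destruct (archimed D) as [H1 _]. exists (Z.to_nat (up D)).
  destruct (Z.le_gt_cases 0 (up D)).
  - rewrite INR_IZR_INZ, Znat.Z2Nat.id by auto. lra.
  - assert (IZR (up D) < 0) by (apply IZR_lt; lia). pose proof (pos_INR (Z.to_nat (up D))). lra.
Qed.

Lemma small_inv eps L : 0 < eps -> exists K0, (L <= K0)%nat /\ / INR (S K0) < eps.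
Proof.
  intros He. destruct (nat_unbounded (/ eps)) as [n Hn]. exists (Nat.max n L). split. lia.
  assert (INR n <= INR (Nat.max n L)) by (apply le_INR; lia).
  assert (INR (Nat.max n L) < INR (S (Nat.max n L))) by (apply lt_INR; lia).
  assert (0 < / eps) by (apply Rinv_0_lt_compat; auto).
  rewrite <- (Rinv_inv eps). apply Rinv_lt_contravar. apply Rmult_lt_0_compat; lra. lra.
Qed.

Lemma fin_bound (h : nat -> nat) K0 : exists L, forall k, (k < K0)%nat -> (h k < L)%nat.
Proof.
  induction K0. exists 0%nat; intros; lia. destruct IHK0 as [L HL].
  exists (Nat.max L (S (h K0))). intros k Hk. destruct (Nat.eq_dec k K0). subst; lia.
  pose proof (HL k ltac:(lia)). lia.
Qed.

Definition StepSpec {K : AbsRing} p N (fs : nat -> nat -> nat) (ws : nat -> nat -> K) (x : nat -> K)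
  (Rf : nat -> nat) (k prev : nat) (nb : nat * nat) : Prop :=
  (prev < fst nb <= snd nb)%nat /\ (Rf (snd (Cantor.of_nat (lbl k))) <= fst nb)%nat /\
  (forall i, (i < N)%nat -> psum p (seq_sub (It (fs i) (ws i) (fst nb) x) (It (fs i) (ws i) (tgt k) x)) < / INR (S k)) /\
  (forall i, (i < N)%nat -> forall s : nat -> R,
     (forall m, 0 <= s m <= if (snd nb <=? Fit (fs i) (fst nb) m)%nat
                             then ap p (It (fs i) (ws i) (fst nb) x) m else 0) ->
     ex_series s /\ Series s <= / INR (S k)).

Definition StSpec {K : AbsRing} p N (fs : nat -> nat -> nat) (ws : nat -> nat -> K) (x : nat -> K)
  (Rf : nat -> nat) (st : nat -> nat -> nat * nat) : Prop :=
  forall k prev, StepSpec p N fs ws x Rf k prev (st k prev).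

Definition RSpec {K : AbsRing} p (x : nat -> K) (Rf : nat -> nat) : Prop :=
  forall J (s : nat -> R), (forall m, 0 <= s m <= if (Rf J <=? m)%nat then ap p x m else 0) ->
  ex_series s /\ Series s <= / INR (S J).

Lemma minus_plus_l {K : AbsRing} (a b : K) : minus (plus a b) a = b.
Proof. exact (@plus_minus_l (AbsRing.AbelianGroup K) a b). Qed.

Lemma M_dense {K : AbsRing} p N fs (ws : nat -> nat -> K) x Rf st :
  0 < p -> in_lp p x -> RSpec p x Rf -> StSpec p N fs ws x Rf st ->
  forall y, in_lp p y -> forall eps, 0 < eps -> exists z, Mset st x z /\ lp_norm p (seq_sub z y) < eps.
Proof.
  intros Hp Hx HR Hst y Hy eps Heps.
  assert (Hst0 : forall k prev, (prev < fst (st k prev) <= snd (st k prev))%nat) by (intros; apply Hst).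
  set (r := rpow eps p). assert (Hr : 0 < r) by (apply rpow_gt0; auto).
  set (r3 := rpow 3 p). assert (Hr3 : 0 < r3) by (apply rpow_gt0; lra).
  set (q := r / (4 * r3)). assert (Hq : 0 < q) by (unfold q; apply Rdiv_lt_0_compat; lra).
  destruct (ser_tail (ap p y) q (ap_nonneg p y) Hy Hq) as [K0 HK0].
  set (Cy := rsumR K0 (fun k => abs (y k))).
  assert (HCy : 0 <= Cy) by (apply rsumR_nonneg; intro; apply abs_ge_0).
  set (CyP := rpow Cy p). assert (HCyP : 0 <= CyP) by apply rpow_nonneg.
  destruct (small_inv (q / (CyP + 1)) 0 ltac:(apply Rdiv_lt_0_compat; lra)) as [J [_ HJ]].
  set (c := fun l => if andb (snd (Cantor.of_nat l) =? J)%nat (fst (Cantor.of_nat l) <? K0)%nat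
                     then y (fst (Cantor.of_nat l)) else zero).
  destruct (fin_bound (fun k => Cantor.to_nat (k, J)) K0) as [L HL].
  assert (Hc : forall l, (L <= l)%nat -> c l = zero).
  { intros l Hl. unfold c. destruct (Nat.eqb_spec (snd (Cantor.of_nat l)) J); auto.
    destruct (Nat.ltb_spec (fst (Cantor.of_nat l)) K0); auto. simpl. exfalso.
    pose proof (HL _ H). rewrite <- e in H0. rewrite <- surjective_pairing, Cantor.cancel_to_of in H0. lia. }
  assert (Hcb : forall l, abs (c l) <= Cy).
  { intro l. unfold c. destruct (andb _ _) eqn:E.
    - apply Bool.andb_true_iff in E. destruct E as [_ E]. apply Nat.ltb_lt in E.
      apply (rsumR_term K0 (fun k => abs (y k))); auto. intro; apply abs_ge_0.
    - rewrite abs_zero; auto. }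
  assert (Hz : forall t, zco c L t = if (t <? K0)%nat then y t else zero).
  { intro t. unfold zco.
    rewrite (ksum_ext L _ (fun l => if (l =? Cantor.to_nat (t, J))%nat then (if (t <? K0)%nat then y t else zero) else zero)).
    - rewrite ksum_delta. destruct (Nat.ltb_spec t K0); auto.
      destruct (Nat.ltb_spec (Cantor.to_nat (t, J)) L); auto. pose proof (HL t H). lia.
      destruct (Cantor.to_nat (t, J) <? L)%nat; auto.
    - intro l. unfold c. destruct (Nat.eqb_spec l (Cantor.to_nat (t, J))).
      + subst l. rewrite Cantor.cancel_of_to. simpl. rewrite Nat.eqb_refl, Nat.eqb_refl. simpl. reflexivity.
      + destruct (Nat.eqb_spec (fst (Cantor.of_nat l)) t); auto.
        destruct (Nat.eqb_spec (snd (Cantor.of_nat l)) J); auto. exfalso. apply n.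
        rewrite <- e, <- e0, <- surjective_pairing, Cantor.cancel_to_of. auto. }
  set (u := fun t => if (K0 <=? t)%nat then y t else zero).
  set (v := fun t => if (Rf J <=? t)%nat then x t else zero).
  assert (Hu : in_lp p u /\ psum p u <= q).
  { apply (HK0 K0 (ap p u)). lia. intro m. split. apply ap_nonneg. unfold u, ap.
    destruct (K0 <=? m)%nat. lra. rewrite abs_zero, rpow_0. lra. }
  assert (Hv : in_lp p v /\ psum p v <= / INR (S J)).
  { apply (HR J (ap p v)). intro m. split. apply ap_nonneg. unfold v, ap.
    destruct (Rf J <=? m)%nat. lra. rewrite abs_zero, rpow_0. lra. }
  destruct Hu as [Hu Hu']. destruct Hv as [Hv Hv'].
  destruct (lp_zero (K:=K) p) as [H0 H0'].
  assert (Hgx : forall t, abs (mult (gco st c t) (x t)) <= Cy * abs (v t)).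
  { intro t. unfold gco. destruct (widx st t) as [k|] eqn:Ew.
    - destruct (andb (snd (Cantor.of_nat (lbl k)) =? J)%nat (fst (Cantor.of_nat (lbl k)) <? K0)%nat) eqn:E.
      + apply Bool.andb_true_iff in E. destruct E as [E _]. apply Nat.eqb_eq in E.
        apply widx_some in Ew. destruct (Hst k (prevend st k)) as [_ [HRk _]].
        fold (start st k) in HRk. rewrite E in HRk.
        unfold v. destruct (Nat.leb_spec (Rf J) t); [|lia].
        eapply Rle_trans. apply abs_mult. apply Rmult_le_compat_r. apply abs_ge_0. apply Hcb.
      + unfold c at 1. rewrite E. rewrite Km0l, abs_zero. apply Rmult_le_pos; auto. apply abs_ge_0.
    - rewrite Km0l, abs_zero. apply Rmult_le_pos; auto. apply abs_ge_0. }
  exists (Xv st x c L). split.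
  { exists c, L. split; auto. }
  assert (Hb : forall m, abs (seq_sub (Xv st x c L) y m) <= 1 * abs (u m) + Cy * abs (v m) + 1 * abs (@seq_zero K m)).
  { intro m. pose proof (abs_ge_0 (@seq_zero K m)). pose proof (Hgx m).
    unfold seq_sub, Xv. rewrite Hz. unfold u. destruct (Nat.ltb_spec m K0).
    - destruct (Nat.leb_spec K0 m); [lia|]. rewrite minus_plus_l. rewrite abs_zero. lra.
    - destruct (Nat.leb_spec K0 m); [|lia]. rewrite Kp0l.
      pose proof (abs_minus_le (mult (gco st c m) (x m)) (y m)). lra. }
  destruct (lp3w p _ u v seq_zero 1 Cy 1 Hp ltac:(lra) HCy ltac:(lra) Hu Hv H0 Hb) as [Hd Hd'].
  apply lp_lt; auto. fold r. rewrite rpow_1, H0' in Hd'. fold r3 CyP in Hd'.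
  assert (CyP * psum p v <= CyP * / INR (S J)) by (apply Rmult_le_compat_l; auto).
  assert (CyP * / INR (S J) <= q).
  { assert (/ INR (S J) * (CyP + 1) < q) by (apply (Rmult_lt_reg_r (/ (CyP + 1))); [apply Rinv_0_lt_compat; lra|];
      rewrite Rmult_assoc, Rinv_r by lra; unfold Rdiv in HJ; lra).
    assert (0 <= / INR (S J)) by (left; apply Rinv_0_lt_compat, lt_0_INR; lia). nra. }
  assert (r3 * q = r / 4) by (unfold q; field; lra).
  assert (r3 * (1 * psum p u + CyP * psum p v + 1 * 0) <= r3 * (q + q)) by (apply Rmult_le_compat_l; lra).
  lra.
Qed.

Lemma lbl_to a b c : lbl (Cantor.to_nat (Cantor.to_nat (a, b), c)) = a.
Proof. unfold lbl. rewrite Cantor.cancel_of_to. cbn [fst]. rewrite Cantor.cancel_of_to. reflexivity. Qed.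
Lemma tgt_to a b c : tgt (Cantor.to_nat (Cantor.to_nat (a, b), c)) = b.
Proof. unfold tgt. rewrite Cantor.cancel_of_to. cbn [fst]. rewrite Cantor.cancel_of_to. reflexivity. Qed.

Lemma M_hc {K : AbsRing} (HK : goodK K) p N fs (ws : nat -> nat -> K) x Rf st :
  0 < p -> (forall i, (i < N)%nat -> pseudo_shift_data (fs i) (ws i)) ->
  d_hypercyclic_vector p N (fun i => pseudo_shift (fs i) (ws i)) x ->
  StSpec p N fs ws x Rf st ->
  forall y, Mset st x y -> ~ (forall m, y m = zero) ->
  d_hypercyclic_vector p N (fun i => pseudo_shift (fs i) (ws i)) y.
Proof.
  intros Hp Hd Hx Hst y HM Hy0.
  assert (Hst0 : forall k prev, (prev < fst (st k prev) <= snd (st k prev))%nat) by (intros; apply Hst).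
  destruct (win_facts st Hst0) as [W1 [W2 [W3 W4]]].
  assert (Hx0 : in_lp p x) by apply Hx.
  assert (HIt : forall i n, (i < N)%nat -> in_lp p (It (fs i) (ws i) n x)).
  { intros i n Hi. apply lp_It; auto. }
  split. apply (M_lp p st x); auto.
  destruct HM as [c [L [Hc E]]].
  destruct (M_nonzero st x c L) as [l0 Hl0].
  { intro H. apply Hy0. intro m. rewrite E. apply H. }
  set (c0 := c l0).
  destruct (gk_inv K HK c0 Hl0) as [ci Hci].
  assert (Hl0L : (l0 < L)%nat).
  { destruct (Nat.lt_ge_cases l0 L); auto. exfalso. apply Hl0. apply Hc; auto. }
  intros ys Hys eps Heps.
  set (r := rpow eps p). assert (Hr : 0 < r) by (apply rpow_gt0; auto).
  set (r3 := rpow 3 p). assert (Hr3 : 0 < r3) by (apply rpow_gt0; lra).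
  set (Cg := rsumR L (fun l => abs (c l))).
  assert (HCg : 0 <= Cg) by (apply rsumR_nonneg; intro; apply abs_ge_0).
  assert (Hc0 : abs c0 <= Cg) by (apply (rsumR_term L (fun l => abs (c l))); auto; intro; apply abs_ge_0).
  set (A := rpow (2 * Cg) p). set (B := rpow (abs c0) p).
  assert (HA : 0 <= A) by apply rpow_nonneg. assert (HB : 0 <= B) by apply rpow_nonneg.
  set (ys' := fun i t => mult ci (ys i t)).
  destruct (lp_zero (K:=K) p) as [H0 H0'].
  assert (Hys' : forall i, (i < N)%nat -> in_lp p (ys' i)).
  { intros i Hi. assert (Hb : forall m, abs (ys' i m) <= abs ci * abs (ys i m) + 0 * abs (@seq_zero K m) + 0 * abs (@seq_zero K m)).
    { intro m. unfold ys'. rewrite !Rmult_0_l, !Rplus_0_r. apply abs_mult. }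
    destruct (lp3w p _ (ys i) seq_zero seq_zero (abs ci) 0 0 Hp (abs_ge_0 ci) ltac:(lra) ltac:(lra)
      (Hys i Hi) H0 H0 Hb) as [Hh _]. exact Hh. }
  set (eta := r / (2 * r3 * (B + 1))).
  assert (Heta : 0 < eta) by (unfold eta; apply Rdiv_lt_0_compat; [lra|]; apply Rmult_lt_0_compat; lra).
  destruct (hc_psum p N _ x Hp (fun i n Hi => HIt i n Hi) Hx ys' Hys' eta Heta) as [n' Hn'].
  set (rho := r / (2 * r3 * (A + B + 1))).
  assert (Hrho : 0 < rho) by (unfold rho; apply Rdiv_lt_0_compat; [lra|]; apply Rmult_lt_0_compat; lra).
  destruct (small_inv rho L Hrho) as [K0 [HK0L HK0]].
  set (k := Cantor.to_nat (Cantor.to_nat (l0, n'), K0)).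
  assert (Hlbl : lbl k = l0) by apply lbl_to.
  assert (Htgt : tgt k = n') by apply tgt_to.
  assert (HkK : (K0 <= k)%nat) by apply to_nat_ge_snd.
  destruct (Hst k (prevend st k)) as [_ [_ [Hsv Hsu]]].
  fold (start st k) in Hsv, Hsu. rewrite <- ends_eq in Hsu. rewrite Htgt in Hsv.
  set (n := start st k) in *. set (b := ends st k) in *.
  assert (Hnk : (k <= n)%nat) by apply W4.
  assert (Hrk : / INR (S k) <= rho).
  { apply Rle_trans with (/ INR (S K0)); [|lra]. apply Rinv_le_contravar. apply lt_0_INR; lia.
    apply le_INR; lia. }
  exists n. intros i Hi.
  destruct (Hd i Hi) as [Hfi [Hf0 _]].
  set (I := It (fs i) (ws i) n x). set (I' := It (fs i) (ws i) n' x).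
  assert (Hyn : forall m, It (fs i) (ws i) n y m = mult (gco st c (Fit (fs i) n m)) (I m)).
  { intro m. rewrite (It_local (fs i) (ws i) Hfi Hf0 n y (Xv st x c L)) by (intros; apply E).
    unfold Xv. rewrite It_plus.
    rewrite (It_local (fs i) (ws i) Hfi Hf0 n (zco c L) seq_zero).
    rewrite It_zero, Kp0l. apply It_pm. apply (gk_comm K HK).
    intros t Ht. apply zco_supp. lia. }
  set (u := fun m => if (b <=? Fit (fs i) n m)%nat then I m else zero).
  assert (Hu : in_lp p u /\ psum p u <= / INR (S k)).
  { apply (Hsu i Hi (ap p u)). intro m. split. apply ap_nonneg. unfold u, ap.
    destruct (b <=? Fit (fs i) n m)%nat. apply Rle_refl. rewrite abs_zero, rpow_0. lra. }
  destruct Hu as [Hu Hu'].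
  set (v := seq_sub I I'). set (w := seq_sub I' (ys' i)).
  assert (Hv : in_lp p v) by (apply lp_sub; auto; apply HIt; auto).
  assert (Hw : in_lp p w) by (apply lp_sub; auto; apply HIt; auto).
  assert (Hv' : psum p v < / INR (S k)) by (apply Hsv; auto).
  assert (Hw' : psum p w < eta) by (apply Hn'; auto).
  assert (Hb : forall m, abs (seq_sub (It (fs i) (ws i) n y) (ys i) m) <=
                 (2 * Cg) * abs (u m) + abs c0 * abs (v m) + abs c0 * abs (w m)).
  { intro m. unfold seq_sub at 1. rewrite Hyn.
    set (G := gco st c (Fit (fs i) n m)).
    assert (Eys : ys i m = mult c0 (ys' i m)).
    { unfold ys'. rewrite Kma. rewrite (gk_comm K HK c0 ci), Hci. symmetry. exact (mult_one_l _). }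
    rewrite Eys.
    pose proof (abs_minus3 (mult G (I m)) (mult c0 (I m)) (mult c0 (I' m)) (mult c0 (ys' i m))) as T.
    assert (T1 : abs (minus (mult G (I m)) (mult c0 (I m))) <= 2 * Cg * abs (u m)).
    { assert (E1 : minus (mult G (I m)) (mult c0 (I m)) = mult (minus G c0) (I m))
        by (symmetry; exact (@mult_minus_r (AbsRing.Ring K) _ _ _)).
      rewrite E1. unfold u. destruct (Nat.leb_spec b (Fit (fs i) n m)).
      - eapply Rle_trans. apply abs_mult. apply Rmult_le_compat_r. apply abs_ge_0.
        eapply Rle_trans. apply abs_minus_le. pose proof (gco_bound st c L Hc (Fit (fs i) n m)). fold G Cg in H1. lra.
      - assert (EG : G = c0).
        { unfold G, gco. rewrite (widx_in st Hst0 _ k). rewrite Hlbl. reflexivity.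
          pose proof (Fit_ge (fs i) Hfi Hf0 n m). split; [fold n; lia | fold b; lia]. }
        rewrite EG. assert (E2 : minus c0 c0 = @zero K) by exact (@minus_eq_zero (AbsRing.AbelianGroup K) c0).
        rewrite E2, Km0l, abs_zero. pose proof (abs_ge_0 (@zero K)). nra. }
    assert (T2 : abs (minus (mult c0 (I m)) (mult c0 (I' m))) <= abs c0 * abs (v m)).
    { unfold v, seq_sub. assert (E3 : minus (mult c0 (I m)) (mult c0 (I' m)) = mult c0 (minus (I m) (I' m)))
        by (symmetry; exact (@mult_minus_l (AbsRing.Ring K) _ _ _)). rewrite E3. apply abs_mult. }
    assert (T3 : abs (minus (mult c0 (I' m)) (mult c0 (ys' i m))) <= abs c0 * abs (w m)).
    { unfold w, seq_sub. assert (E3 : minus (mult c0 (I' m)) (mult c0 (ys' i m)) = mult c0 (minus (I' m) (ys' i m)))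
        by (symmetry; exact (@mult_minus_l (AbsRing.Ring K) _ _ _)). rewrite E3. apply abs_mult. }
    eapply Rle_trans; [exact T|]. apply Rplus_le_compat; [apply Rplus_le_compat|]; [exact T1 | exact T2 | exact T3]. }
  destruct (lp3w p _ u v w (2 * Cg) (abs c0) (abs c0) Hp ltac:(lra) (abs_ge_0 c0) (abs_ge_0 c0) Hu Hv Hw Hb)
    as [Hd1 Hd2].
  apply lp_lt; auto. fold r. fold A B r3 in Hd2.
  assert (A * psum p u <= A * rho) by (apply Rmult_le_compat_l; lra).
  assert (B * psum p v <= B * rho) by (apply Rmult_le_compat_l; lra).
  assert (B * psum p w <= B * eta) by (apply Rmult_le_compat_l; lra).
  assert (E1 : r3 * (rho * (A + B)) < r / 2).
  { unfold rho. replace (r3 * (r / (2 * r3 * (A + B + 1)) * (A + B))) with (r / 2 * ((A + B) / (A + B + 1))) by (field; lra).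
    assert ((A + B) / (A + B + 1) < 1) by (apply Rmult_lt_reg_r with (A + B + 1); [lra|]; unfold Rdiv;
      rewrite Rmult_assoc, Rinv_l by lra; lra). nra. }
  assert (E2 : r3 * (B * eta) < r / 2).
  { unfold eta. replace (r3 * (B * (r / (2 * r3 * (B + 1))))) with (r / 2 * (B / (B + 1))) by (field; lra).
    assert (B / (B + 1) < 1) by (apply Rmult_lt_reg_r with (B + 1); [lra|]; unfold Rdiv;
      rewrite Rmult_assoc, Rinv_l by lra; lra). nra. }
  assert (r3 * (A * psum p u + B * psum p v + B * psum p w) <= r3 * (rho * (A + B)) + r3 * (B * eta)).
  { rewrite <- Rmult_plus_distr_l. apply Rmult_le_compat_l; lra. }
  change (psum p (seq_sub (It (fs i) (ws i) n y) (ys i)) < r). lra.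
Qed.

Lemma forward {K : AbsRing} (HK : goodK K) p N fs (ws : nat -> nat -> K) :
  1 <= p -> (2 <= N)%nat -> (forall i, (i < N)%nat -> pseudo_shift_data (fs i) (ws i)) ->
  d_hypercyclic p N (fun i => pseudo_shift (fs i) (ws i)) ->
  has_dense_d_hypercyclic_manifold p N (fun i => pseudo_shift (fs i) (ws i)).
Proof.
  intros Hp1 HN Hd [x Hx]. assert (Hp : 0 < p) by lra.
  assert (Hx0 : in_lp p x) by apply Hx.
  assert (HIt : forall i n, (i < N)%nat -> in_lp p (It (fs i) (ws i) n x)).
  { intros i n Hi. apply lp_It; auto. }
  assert (HRf : exists Rf : nat -> nat, RSpec p x Rf).
  { apply (my_choice (fun J M => forall s : nat -> R, (forall m, 0 <= s m <= if (M <=? m)%nat then ap p x m else 0) ->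
       ex_series s /\ Series s <= / INR (S J))).
    intro J. destruct (ser_tail (ap p x) (/ INR (S J)) (ap_nonneg p x) Hx0
      (Rinv_0_lt_compat _ (lt_0_INR _ (Nat.lt_0_succ J)))) as [M HM].
    exists M. intros s Hs. apply (HM M s (Nat.le_refl M) Hs). }
  destruct HRf as [Rf HRf].
  assert (Hst : exists st, StSpec p N fs ws x Rf st).
  { assert (Hex : forall kp : nat * nat, exists nb, StepSpec p N fs ws x Rf (fst kp) (snd kp) nb).
    { intros [k prev]. simpl.
      assert (Hrho : 0 < / INR (S k)) by (apply Rinv_0_lt_compat, lt_0_INR; lia).
      destruct (late HK p N fs ws x Hp ltac:(lia) Hd Hx (fun i => It (fs i) (ws i) (tgt k) x)
        (fun i Hi => HIt i (tgt k) Hi) _ Hrho (Nat.max (S prev) (Rf (snd (Cantor.of_nat (lbl k))))))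
        as [n [Hn0 Hn]].
      destruct (fin_ev (fun i M' => forall s : nat -> R,
          (forall m, 0 <= s m <= if (M' <=? m)%nat then ap p (It (fs i) (ws i) n x) m else 0) ->
          ex_series s /\ Series s <= / INR (S k)) N) as [M HM].
      { intros i Hi. destruct (ser_tail (ap p (It (fs i) (ws i) n x)) _ (ap_nonneg p _) (HIt i n Hi) Hrho) as [M HM].
        exists M. intros M' HM' s Hs. apply (HM M' s HM' Hs). }
      specialize (HM M (Nat.le_refl M)).
      destruct (fin_ev (fun i b => (Fit (fs i) n M <= b)%nat) N) as [B0 HB0].
      { intros i Hi. exists (Fit (fs i) n M). intros; lia. }
      exists (n, Nat.max n B0). unfold StepSpec. simpl. split; [lia|]. split; [lia|]. split.
      { intros i Hi. apply Hn; auto. }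
      intros i Hi s Hs. apply (HM i Hi). intro m. specialize (Hs m).
      destruct (Hd i Hi) as [Hfi _].
      destruct (Nat.leb_spec (Nat.max n B0) (Fit (fs i) n m)).
      - destruct (Nat.leb_spec M m). auto. exfalso.
        pose proof (Fit_mono (fs i) Hfi n m M H0). pose proof (HB0 (Nat.max n B0) ltac:(lia) i Hi). lia.
      - destruct (M <=? m)%nat. pose proof (ap_nonneg p (It (fs i) (ws i) n x) m). lra. lra. }
    destruct (my_choice _ Hex) as [F HF].
    exists (fun k prev => F (k, prev)). intros k prev. apply (HF (k, prev)). }
  destruct Hst as [st Hst].
  exists (Mset st x). split; [|split; [|split; [|split; [|split]]]].
  - intros y Hy. apply (M_lp p st x); auto.
  - apply M_zero.
  - intros y1 y2. apply M_add.
  - intros a y. apply M_scal.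
  - apply (M_dense p N fs ws x Rf st); auto.
  - intros y Hy Hy0. apply (M_hc HK p N fs ws x Rf st); auto.
Qed.

Lemma backward {K : AbsRing} (HK : goodK K) p N (T : nat -> (nat -> K) -> (nat -> K)) :
  1 <= p -> has_dense_d_hypercyclic_manifold p N T -> d_hypercyclic p N T.
Proof.
  intros Hp1 [M [HMlp [_ [_ [_ [Hdense Hhc]]]]]]. assert (Hp : 0 < p) by lra.
  destruct (gk_val K HK 1 ltac:(lra)) as [a Ha].
  set (y0 := fun t => if (t =? 0)%nat then a else zero).
  assert (Hy0 : in_lp p y0).
  { apply (lp_finite p y0 1). intros m Hm. unfold y0. destruct (Nat.eqb_spec m 0); auto. lia. }
  destruct (Hdense y0 Hy0 1 ltac:(lra)) as [x [HMx Hn]].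
  exists x. apply Hhc; auto. intro Hz.
  assert (Hd : in_lp p (seq_sub x y0)) by (apply lp_sub; auto).
  apply lp_lt in Hn; auto; try lra. rewrite rpow_1 in Hn.
  pose proof (ser_term (ap p (seq_sub x y0)) 0 (ap_nonneg p _) Hd) as Ht.
  change (Series (ap p (seq_sub x y0))) with (psum p (seq_sub x y0)) in Ht.
  assert (E : abs (seq_sub x y0 0%nat) = 1).
  { unfold seq_sub, y0. simpl. rewrite Hz. unfold minus.
    transitivity (abs (opp a)). f_equal. exact (Kp0l _). rewrite abs_opp. auto. }
  unfold ap in Ht. rewrite E, rpow_1 in Ht. lra.
Qed.

Lemma goodR : goodK R_AbsRing.
Proof.
  constructor.
  - intros a b. exact (Rmult_comm a b).
  - intros a b. exact (Rabs_mult a b).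
  - intros a Ha. exists (/ a). exact (Rinv_l a Ha).
  - intros r Hr. exists r. exact (Rabs_pos_eq r (Rlt_le _ _ Hr)).
Qed.

Lemma goodC : goodK C_AbsRing.
Proof.
  constructor.
  - intros a b. exact (Cmult_comm a b).
  - intros a b. exact (Cmod_mult a b).
  - intros a Ha. exists (/ a)%C. exact (Cinv_l a Ha).
  - intros r Hr. exists (RtoC r). change (Cmod (RtoC r) = r). rewrite Cmod_R. apply Rabs_pos_eq; lra.
Qed.

Theorem corollary2p6 : @corollary_statement R_AbsRing /\ @corollary_statement C_AbsRing.
Proof.
  split; intros p N fs ws Hp HN Hd; split.
  - apply (forward goodR); auto.
  - apply (backward goodR); auto.
  - apply (forward goodC); auto.
  - apply (backward goodC); auto.
Qed.
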